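(* Let $m$ be a positive integer and let $D,D'$ be abstract storage devices with $|\mathcal{S}_D|=|\mathcal{S}_{D'}|=m$ and $D\le D'$. Then $i(D)\ge i(D')$.
   Context: An abstract storage device (ASD) is a pair $D=(\mathcal{S}_D,\mathcal{P}_D)$, $\mathcal{S}_D$ a finite set and $\mathcal{P}_D$ a finite family of partitions of $\mathcal{S}_D$. For a partition $\pi$ of $\mathcal{S}'$ and $\phi:\mathcal{S}\to\mathcal{S}'$, $\pi\circ\phi$ is the partition of $\mathcal{S}$ with $x,y$ in the same block iff $\phi(x),\phi(y)$ are in the same block of $\pi$; $\pi\preceq\rho$ means every block of $\pi$ lies in a block of $\rho$; $\wedge$ is the meet of partitions. $D\le D'$ means there exist $\phi:\mathcal{S}_D\to\mathcal{S}_{D'}$, $\alpha:\mathcal{P}_D\to\mathcal{P}_{D'}$ with $\alpha(\pi)\circ\phi\preceq\pi$ for all $\pi\in\mathcal{P}_D$. $D$ is perfect if $\mathrm{id}_{\mathcal{S}_D}=\{\{s\}:s\in\mathcal{S}_D\}\in\mathcal{P}_D$. $D^{(k)}$ has state space $\mathcal{S}_D$ and partition set $\{\pi_1\wedge\cdots\wedge\pi_k:\pi_i\in\mathcal{P}_D\}$. The perfectness index $i(D)$ is the least integer $k\ge1$ with $D^{(k)}$ perfect, and $i(D)=\infty$ if none exists. *)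

(* Defs.v *)
From mathcomp Require Import all_boot.
Set Implicit Arguments. Unset Strict Implicit. Unset Printing Implicit Defensive.

Record ASD := MkASD {
  st : finType;
  parts : {set {set {set st}}};
  parts_ok : forall pi, pi \in parts -> partition pi [set: st]
}.

(* pi o phi : x,y in the same block iff phi x, phi y in the same block of pi;
   its blocks are the nonempty preimages of blocks of pi. *)
Definition pullback (S S' : finType) (pi : {set {set S'}}) (phi : S -> S')
  : {set {set S}} := [set phi @^-1: B | B : {set S'} in pi] :\ set0.

Definition refines (S : finType) (pi rho : {set {set S}}) : Prop :=
  forall B, B \in pi -> exists2 C, C \in rho & B \subset C.

Definition pmeet (S : finType) (pi rho : {set {set S}}) : {set {set S}} :=
  [set A :&: B | A : {set S} in pi, B : {set S} in rho] :\ set0.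

Definition asd_le (D D' : ASD) : Prop :=
  exists (phi : st D -> st D') (alpha : {set {set st D}} -> {set {set st D'}}),
    forall pi, pi \in parts D ->
      alpha pi \in parts D' /\ refines (pullback (alpha pi) phi) pi.

Fixpoint meets_k (S : finType) (P : {set {set {set S}}}) (k : nat)
  : {set {set {set S}}} :=
  match k with
  | 0 => set0 (* unused: k >= 1 throughout *)
  | 1 => P
  | k'.+1 => [set pmeet pi rho | pi in meets_k P k', rho in P]
  end.

Definition perfect_k (D : ASD) (k : nat) : Prop :=
  [set [set x] | x : st D] \in meets_k (parts D) k.

(* perf_index D i : i(D) = i, where None encodes infinity. *)
Definition perf_index (D : ASD) (i : option nat) : Prop :=
  match i with
  | Some k => 0 < k /\ perfect_k D k /\ (forall j, 0 < j -> j < k -> ~ perfect_k D j)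
  | None => forall k, 0 < k -> ~ perfect_k D k
  end.

Definition le_ext (a b : option nat) : Prop :=
  match a, b with
  | _, None => True
  | None, Some _ => False
  | Some x, Some y => x <= y
  end.

(* Main.v *)
Require Import Defs.
From mathcomp Require Import all_boot.

Lemma pullback_pmeet (T T' : finType) (phi : T -> T') (A B : {set {set T}})
  (A' B' : {set {set T'}}) :
  refines (pullback A' phi) A -> refines (pullback B' phi) B ->
  refines (pullback (pmeet A' B') phi) (pmeet A B).
Proof.
move=> hA hB X; rewrite !inE => /andP[X0 /imsetP[Y HY EX]]; subst X.
move: HY; rewrite !inE => /andP[_ /imset2P[A1 B1 HA1 HB1 EY]]; subst Y.
rewrite preimsetI in X0 *.
have nA : phi @^-1: A1 != set0.
  by apply: contraNneq X0 => ->; rewrite set0I.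
have nB : phi @^-1: B1 != set0.
  by apply: contraNneq X0 => ->; rewrite setI0.
have [C1 HC1 sC1] : exists2 C, C \in A & phi @^-1: A1 \subset C.
  by apply: hA; rewrite !inE nA; apply/imsetP; exists A1.
have [C2 HC2 sC2] : exists2 C, C \in B & phi @^-1: B1 \subset C.
  by apply: hB; rewrite !inE nB; apply/imsetP; exists B1.
exists (C1 :&: C2); last exact: setISS.
rewrite !inE; apply/andP; split; last by apply/imset2P; exists C1 C2.
apply: contraNneq X0 => h; rewrite -subset0 -h; exact: setISS.
Qed.

Lemma meets_partition (T : finType) (P : {set {set {set T}}}) :
  (forall pi, pi \in P -> partition pi [set: T]) ->
  forall k Q, Q \in meets_k P k -> partition Q [set: T].
Proof.
move=> hP; elim=> [|k IH] Q //=; first by rewrite inE.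
case: k IH => [|k] IH; first exact: hP.
move=> /imset2P[pi rho Hpi Hrho ->].
have /and3P[cA tA nA] := IH _ Hpi.
have /and3P[cB tB nB] := hP _ Hrho.
apply/and3P; split.
- apply/eqP/setP => x; rewrite inE; apply/bigcupP.
  have xA : x \in cover pi by rewrite (eqP cA).
  have xB : x \in cover rho by rewrite (eqP cB).
  exists (pblock pi x :&: pblock rho x); last by rewrite inE !mem_pblock xA xB.
  rewrite !inE; apply/andP; split.
    by apply/set0Pn; exists x; rewrite inE !mem_pblock xA xB.
  by apply/imset2P; exists (pblock pi x) (pblock rho x) => //; apply: pblock_mem.
- apply/trivIsetP => X Y; rewrite !inE => /andP[_ /imset2P[A1 B1 HA1 HB1 ->]].
  move=> /andP[_ /imset2P[A2 B2 HA2 HB2 ->]] ne.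
  apply/pred0P => x /=; apply/negbTE/negP => /andP[].
  rewrite !inE => /andP[x1 y1] /andP[x2 y2].
  move/negP: ne; apply; apply/eqP.
  by rewrite -(def_pblock tA HA1 x1) -(def_pblock tA HA2 x2)
             -(def_pblock tB HB1 y1) -(def_pblock tB HB2 y2).
- by rewrite !inE eqxx.
Qed.

Lemma transfer (D D' : ASD) (phi : st D -> st D')
  (alpha : {set {set st D}} -> {set {set st D'}}) :
  (forall pi, pi \in parts D -> alpha pi \in parts D' /\ refines (pullback (alpha pi) phi) pi) ->
  forall k Q, Q \in meets_k (parts D) k ->
  exists2 Q', Q' \in meets_k (parts D') k & refines (pullback Q' phi) Q.
Proof.
move=> h; elim=> [|k IH] Q //=; first by rewrite inE.
case: k IH => [|k] IH; first by move=> /h[a b]; exists (alpha Q).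
move=> /imset2P[pi rho Hpi Hrho ->].
have [Q1 HQ1 r1] := IH _ Hpi.
have [a2 r2] := h _ Hrho.
exists (pmeet Q1 (alpha rho)); first by apply/imset2P; exists Q1 (alpha rho).
exact: pullback_pmeet.
Qed.

Lemma discrete_end (T T' : finType) (phi : T -> T') (Q : {set {set T'}}) :
  partition Q [set: T'] -> #|T| = #|T'| ->
  refines (pullback Q phi) [set [set x] | x : T] -> Q = [set [set y] | y : T'].
Proof.
move=> /and3P[cQ tQ nQ] card r.
have cov y : y \in cover Q by rewrite (eqP cQ).
have pre x : phi @^-1: pblock Q (phi x) \subset [set x].
  have [C HC s] : exists2 C, C \in [set [set x] | x : T] & phi @^-1: pblock Q (phi x) \subset C.
    apply: r; rewrite !inE; apply/andP; split.
      by apply/set0Pn; exists x; rewrite inE mem_pblock.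
    by apply/imsetP; exists (pblock Q (phi x)) => //; apply: pblock_mem.
  move: HC s => /imsetP[z _ ->] s.
  have : x \in [set z] by apply: (subsetP s); rewrite inE mem_pblock cov.
  by rewrite inE => /eqP exz; subst x.
have inj : injective phi.
  move=> x y e; have := subsetP (pre x) y; rewrite !inE e mem_pblock cov.
  by move=> /(_ isT) /eqP.
have onto y : exists x, y = phi x.
  have := inj_card_onto inj (eq_leq (esym card)) y.
  by move=> /codomP[x ->]; exists x.
have blk B : B \in Q -> exists y, B = [set y].
  move=> HB; have : B != set0 by apply: contraNneq nQ => <-.
  case/set0Pn => y yB; exists y; apply/setP => w; rewrite inE.
  apply/idP/eqP => [wB|->//].
  have [x ex] := onto y; have [x' ex'] := onto w.
  have := subsetP (pre x) x'; rewrite !inE -ex -ex' (def_pblock tQ HB yB) wB.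
  by move=> /(_ isT) /eqP e; rewrite ex ex' e.
apply/setP => B; apply/idP/imsetP => [HB|[y _ ->]].
  by have [y ->] := blk B HB; exists y.
have Hp := pblock_mem (cov y).
have [z ez] := blk _ Hp.
have : y \in pblock Q y by rewrite mem_pblock.
by rewrite ez inE => /eqP ->; rewrite -ez.
Qed.

Lemma perfect_transfer (D D' : ASD) k :
  #|st D| = #|st D'| -> asd_le D D' -> perfect_k D k -> perfect_k D' k.
Proof.
move=> card [phi [alpha h]] pk.
have [Q' HQ' r] := @transfer D D' phi alpha h k _ pk.
rewrite /perfect_k -(@discrete_end _ _ phi Q' _ card r) //.
exact: (@meets_partition (st D') (parts D') (@parts_ok D') k Q' HQ').
Qed.

Theorem proposition4 (m : nat) (D D' : ASD) (iD iD' : option nat) :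
  0 < m -> #|st D| = m -> #|st D'| = m -> asd_le D D' ->
  perf_index D iD -> perf_index D' iD' ->
  le_ext iD' iD.
Proof.
move=> _ c1 c2 le.
case: iD => [k|]; last by case: iD'.
move=> /= [k0 [pk _]].
have pk' := @perfect_transfer D D' k (etrans c1 (esym c2)) le pk.
case: iD' => [k'|] /=; last by move=> /(_ k k0).
move=> [_ [_ min]]; rewrite leqNgt; apply/negP => lt.
exact: (min k k0 lt pk').
Qed.
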